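(* Let $u(t)=\sum_{i=1}^M s_i(t)e^{j2\pi f_it}$ be a signal in the class $\mathcal{M}_2$ described in the context, observed by the L-shaped array described in the context with $N$ sensors along each axis and spacing $d$. Define $\mathbf{R}_1=\mathbb{E}[\mathbf{x}_1\mathbf{z}_1^H]$, $\mathbf{R}_2=\mathbb{E}[\mathbf{x}_2\mathbf{z}_1^H]$, $\mathbf{R}_3=\mathbb{E}[\mathbf{x}_1\mathbf{z}_2^H]$ and $\mathbf{R}=[\mathbf{R}_1^T\ \mathbf{R}_2^T\ \mathbf{R}_3^T]^T\in\mathbb{C}^{3(N-1)\times(N-1)}$, and let $\mathbf{U}_1\in\mathbb{C}^{3(N-1)\times M}$ be the matrix of left singular vectors of $\mathbf{R}$ corresponding to its $M$ largest singular values. If (c1) $d\le\frac{c}{f_{\text{Nyq}}}$ and (c2) $N>M$, then there exists an invertible $M\times M$ matrix $\mathbf{T}$ such that $$\mathbf{U}_1=\begin{bmatrix}\mathbf{A}_{x_1}\\ \mathbf{A}_{x_1}\boldsymbol{\Phi}\\ \mathbf{A}_{x_1}\boldsymbol{\Psi}^H\end{bmatrix}\mathbf{T}.$$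
   Context: Class $\mathcal{M}_2$: $u$ is complex valued with Fourier transform supported in $[-f_{\text{Nyq}}/2,f_{\text{Nyq}}/2]$, each $s_i$ has Fourier transform supported in $[-B/2,B/2]$, $\min_{i\neq j}|f_i-f_j|>B$; the $s_i$ are wide-sense stationary, zero mean, mutually uncorrelated, with $\mathbb{E}[|s_i(t)|^2]\neq 0$; transmission $i$ lies in the $xz$-plane with unknown angle of arrival $\theta_i$, $|\theta_i|<90^\circ$ (measured from the positive $x$ axis), and the electronic angles are distinct: $f_i\cos\theta_i\neq f_j\cos\theta_j$ and $f_i\sin\theta_i\neq f_j\sin\theta_j$ for $i\neq j$. $c>0$ is the propagation speed. L-shaped array: two orthogonal uniform linear arrays (along $x$ and $z$), $N$ sensors each with a common sensor at the origin, spacing $d$; every sensor multiplies its received signal by the same periodic function $p(t)$, low-pass filters and samples at rate $f_s$. With $\tau_n^x(\theta)=\frac{dn}{c}\cos\theta$, $\tau_n^z(\theta)=\frac{dn}{c}\sin\theta$, the samples satisfy $\mathbf{x}[k]=\mathbf{A}_x\mathbf{w}[k]$, $\mathbf{z}[k]=\mathbf{A}_z\mathbf{w}[k]$, where $(\mathbf{A}_x)_{n,i}=e^{j2\pi f_i\tau_n^x(\theta_i)}$, $(\mathbf{A}_z)_{n,i}=e^{j2\pi f_i\tau_n^z(\theta_i)}$, $n=1,\dots,N$, and $\mathbf{w}[k]\in\mathbb{C}^M$ has entries $w_i[k]=\tilde s_i(k/f_s)$ ($\tilde s_i$ the filtered version of $s_i(t)e^{j2\pi f_it}p(t)$); $\mathbf{R}_w=\mathbb{E}[\mathbf{w}\mathbf{w}^H]$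 is diagonal with nonzero diagonal entries. $\mathbf{x}_1,\mathbf{A}_{x_1}$ (resp. $\mathbf{x}_2,\mathbf{A}_{x_2}$) are the first (resp. last) $N-1$ rows of $\mathbf{x},\mathbf{A}_x$; likewise $\mathbf{z}_1,\mathbf{z}_2,\mathbf{A}_{z_1},\mathbf{A}_{z_2}$. $\boldsymbol{\Phi}=\mathrm{diag}(e^{j2\pi f_i\tau_1^x(\theta_i)})_{i=1}^M$, $\boldsymbol{\Psi}=\mathrm{diag}(e^{j2\pi f_i\tau_1^z(\theta_i)})_{i=1}^M$, so $\mathbf{A}_{x_2}=\mathbf{A}_{x_1}\boldsymbol{\Phi}$, $\mathbf{A}_{z_2}=\mathbf{A}_{z_1}\boldsymbol{\Psi}$. *)

(* Defs.v *)
From HB Require Import structures.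
From mathcomp Require Import all_boot all_order all_algebra.
From mathcomp Require Import all_classical all_reals all_analysis.
From mathcomp.real_closed Require Import complex.
Set Implicit Arguments. Unset Strict Implicit. Unset Printing Implicit Defensive.
Import Order.TTheory GRing.Theory Num.Theory.
Local Open Scope ring_scope.
Local Open Scope complex_scope.

Section Defs.
Variable R : realType.
Local Notation C := R[i].

Definition expj (a : R) : C := (cos a +i* sin a).

Definition mxH (m n : nat) (A : 'M[C]_(m, n)) : 'M[C]_(n, m) := (map_mx conjc A)^T.

Definition unitary_mx (n : nat) (U : 'M[C]_n) : Prop := mxH U *m U = 1%:M.

Definition sv_diag (m n : nat) (S : 'M[C]_(m, n)) : Prop :=
  [/\ forall (i : 'I_m) (j : 'I_n), (i : nat) <> j -> S i j = 0,
      forall (i : 'I_m) (j : 'I_n), (i : nat) = j -> complex.Im (S i j) = 0 /\ 0 <= complex.Re (S i j)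
    & forall (i i' : 'I_m) (j j' : 'I_n), (i : nat) = j -> (i' : nat) = j' ->
        (i <= i')%N -> complex.Re (S i' j') <= complex.Re (S i j)].

Definition is_svd (m n : nat) (A : 'M[C]_(m, n)) (U : 'M[C]_m) (S : 'M[C]_(m, n))
  (V : 'M[C]_n) : Prop :=
  [/\ unitary_mx U, unitary_mx V, sv_diag S & A = U *m S *m mxH V].

Definition first_cols (m k : nat) : 'M[C]_(m, k) :=
  \matrix_(a < m, b < k) ((a : nat) == b)%:R.

Definition top_left_sing_vecs (m n k : nat) (A : 'M[C]_(m, n)) (U1 : 'M[C]_(m, k)) : Prop :=
  exists U S V, is_svd A U S V /\ U1 = U *m first_cols m k.

Definition sel_first (N : nat) : 'M[C]_(N.-1, N) :=
  \matrix_(a < N.-1, b < N) ((b : nat) == a)%:R.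
Definition sel_last (N : nat) : 'M[C]_(N.-1, N) :=
  \matrix_(a < N.-1, b < N) ((b : nat) == a.+1)%:R.

Definition Ec (d : measure_display) (T : measurableType d) (P : probability T R)
  (X : T -> C) : C :=
  (fine ('E_P[fun t => complex.Re (X t)]) +i* fine ('E_P[fun t => complex.Im (X t)])).

Definition c_integrable (d : measure_display) (T : measurableType d)
  (P : probability T R) (X : T -> C) : Prop :=
  P.-integrable setT (EFin \o (fun t => complex.Re (X t))) /\
  P.-integrable setT (EFin \o (fun t => complex.Im (X t))).

Definition Ecorr (d : measure_display) (T : measurableType d) (P : probability T R)
  (m n : nat) (X : T -> 'cV[C]_m) (Y : T -> 'cV[C]_n) : 'M[C]_(m, n) :=
  \matrix_(a, b) Ec P (fun t => X t a 0 * conjc (Y t b 0)).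

Definition taux (d c : R) (n : nat) (th : R) : R := d * n%:R / c * cos th.
Definition tauz (d c : R) (n : nat) (th : R) : R := d * n%:R / c * sin th.

(* steering matrices; rows n = 1..N *)
Definition Ax (N M : nat) (d c : R) (f th : 'I_M -> R) : 'M[C]_(N, M) :=
  \matrix_(n < N, i < M) expj (2 * pi * f i * taux d c n.+1 (th i)).
Definition Az (N M : nat) (d c : R) (f th : 'I_M -> R) : 'M[C]_(N, M) :=
  \matrix_(n < N, i < M) expj (2 * pi * f i * tauz d c n.+1 (th i)).
Definition Phi (M : nat) (d c : R) (f th : 'I_M -> R) : 'M[C]_M :=
  diag_mx (\row_(i < M) expj (2 * pi * f i * taux d c 1 (th i))).
Definition Psi (M : nat) (d c : R) (f th : 'I_M -> R) : 'M[C]_M :=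
  diag_mx (\row_(i < M) expj (2 * pi * f i * tauz d c 1 (th i))).

End Defs.

(* Main.v *)
Require Import Defs.
From HB Require Import structures.
From mathcomp Require Import all_boot all_order all_algebra.
From mathcomp Require Import all_classical all_reals all_analysis.
From mathcomp.real_closed Require Import complex.
From mathcomp Require Import ring lra.
Import Order.TTheory GRing.Theory Num.Theory.
Local Open Scope ring_scope.
Local Open Scope complex_scope.
Set Implicit Arguments. Unset Strict Implicit. Unset Printing Implicit Defensive.
Section S.
Variable R : realType.
Local Notation C := R[i].
Lemma expjD (a b : R) : expj a * expj b = expj (a + b).
Proof. rewrite /expj cosD sinD /=. congr (_ +i* _); ring. Qed.
Lemma expj0 : expj 0 = 1 :> C.
Proof. by rewrite /expj cos0 sin0. Qed.

Lemma expj_neq0 a : expj a != 0 :> C.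
Proof. apply/negP => /eqP h. have := expjD a (-a). rewrite h mul0r subrr expj0 => /eqP. by rewrite eq_sym oner_eq0. Qed.
Lemma expjX a n : expj a ^+ n = expj (n%:R * a) :> C.
Proof. elim: n => [|n IH]; first by rewrite expr0 mul0r expj0.
by rewrite exprS IH expjD -{1}(mul1r a) -mulrDl -natr1 addrC. Qed.

Lemma sin_eq0_small (y : R) : `|y| < pi -> sin y = 0 -> y = 0.
Proof.
move=> hy hs; have [/eqP//|ny] := boolP (y == 0).
case: (ltgtP y 0) => [yn|yp|->//].
- have : 0 < sin (- y).
    by apply: sin_gt0_pi; rewrite oppr_gt0 yn /=; rewrite ltr0_norm // in hy.
  by rewrite sinN hs oppr0 ltxx.
- have : 0 < sin y.
    by apply: sin_gt0_pi; rewrite yp /=; rewrite gtr0_norm // in hy.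
  by rewrite hs ltxx.
Qed.

Lemma expj_inj (a b : R) : `|a - b| < pi *+ 2 -> expj a = expj b :> C -> a = b.
Proof.
move=> hab heq.
have h1 : expj (a - b) = 1 :> C by rewrite -expjD heq expjD subrr expj0.
case: h1 => hc hs.
set y := (a - b) / 2.
have hy : a - b = y + y by rewrite /y -splitr.
rewrite hy cosD in hc.
have hsy : sin y = 0.
  have := cos2Dsin2 y; move: hc; rewrite -!expr2 => hc.
  move=> h2; have : sin y ^+ 2 = 0 by lra.
  by move/eqP; rewrite sqrf_eq0 => /eqP.
have hyp : `|y| < pi.
  by rewrite /y normrM normfV (ger0_norm (ler0n _ 2)) ltr_pdivrMr // mulr_natr.
apply/eqP; rewrite -subr_eq0 hy (sin_eq0_small hyp hsy) addr0 //.
Qed.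
End S.
Section Ec.
Variables (R : realType) (d : measure_display) (T : measurableType d) (P : probability T R).
Local Notation C := R[i].

Lemma ReD (x y : C) : complex.Re (x + y) = complex.Re x + complex.Re y.
Proof. by case: x; case: y. Qed.
Lemma ImD (x y : C) : complex.Im (x + y) = complex.Im x + complex.Im y.
Proof. by case: x; case: y. Qed.
Lemma ReM (x y : C) : complex.Re (x * y) = complex.Re x * complex.Re y - complex.Im x * complex.Im y.
Proof. by case: x; case: y. Qed.
Lemma ImM (x y : C) : complex.Im (x * y) = complex.Re x * complex.Im y + complex.Im x * complex.Re y.
Proof. by case: x => a b; case: y => c e /=; rewrite addrC. Qed.

Definition goodc (X : T -> C) :=
  (fun t => complex.Re (X t)) \in Lfun P 1 /\ (fun t => complex.Im (X t)) \in Lfun P 1.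

Lemma goodcE X : c_integrable P X -> goodc X.
Proof. by case=> h1 h2; split; apply/Lfun1_integrable. Qed.

Lemma goodc_add X Y : goodc X -> goodc Y -> goodc (fun t => X t + Y t).
Proof.
case=> h1 h2 [h3 h4]; split.
- have -> : (fun t => complex.Re (X t + Y t)) = (fun t => complex.Re (X t)) + (fun t => complex.Re (Y t)).
    by apply/funext => t; rewrite ReD.
  exact: rpredD.
- have -> : (fun t => complex.Im (X t + Y t)) = (fun t => complex.Im (X t)) + (fun t => complex.Im (Y t)).
    by apply/funext => t; rewrite ImD.
  exact: rpredD.
Qed.

Lemma goodc_scale (a : C) X : goodc X -> goodc (fun t => a * X t).
Proof.
case=> h1 h2; split.
- have -> : (fun t => complex.Re (a * X t)) = complex.Re a *: (fun t => complex.Re (X t)) - complex.Im a *: (fun t => complex.Im (X t)).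
    by apply/funext => t; rewrite ReM.
  by rewrite rpredB // rpredZ.
- have -> : (fun t => complex.Im (a * X t)) = complex.Re a *: (fun t => complex.Im (X t)) + complex.Im a *: (fun t => complex.Re (X t)).
    by apply/funext => t; rewrite ImM.
  by rewrite rpredD // rpredZ.
Qed.

Lemma goodc0 : goodc (fun _ => 0).
Proof. by split; rewrite /= (_ : (fun _ => _) = cst 0) ?Lfun_cst //; apply/funext. Qed.

Lemma Ec_add X Y : goodc X -> goodc Y -> Ec P (fun t => X t + Y t) = Ec P X + Ec P Y.
Proof.
case=> h1 h2 [h3 h4]; rewrite /Ec.
have -> : (fun t => complex.Re (X t + Y t)) = (fun t => complex.Re (X t)) \+ (fun t => complex.Re (Y t)).
  by apply/funext => t; rewrite ReD.
have -> : (fun t => complex.Im (X t + Y t)) = (fun t => complex.Im (X t)) \+ (fun t => complex.Im (Y t)).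
  by apply/funext => t; rewrite ImD.
rewrite !expectationD // !fineD //; exact: expectation_fin_num.
Qed.

Lemma Ec_scale (a : C) X : goodc X -> Ec P (fun t => a * X t) = a * Ec P X.
Proof.
case=> h1 h2; rewrite /Ec.
have -> : (fun t => complex.Re (a * X t)) = (complex.Re a \o* (fun t => complex.Re (X t))) \- (complex.Im a \o* (fun t => complex.Im (X t))).
  by apply/funext => t; rewrite ReM /= mulrC [complex.Im a * _]mulrC.
have -> : (fun t => complex.Im (a * X t)) = (complex.Re a \o* (fun t => complex.Im (X t))) \+ (complex.Im a \o* (fun t => complex.Re (X t))).
  by apply/funext => t; rewrite ImM /= mulrC [complex.Im a * _]mulrC.
have f1 := expectation_fin_num h1; have f2 := expectation_fin_num h2.
have z1 : forall k (f : T -> R), f \in Lfun P 1 -> k \o* f \in Lfun P 1.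
  by move=> k f hf; rewrite (_ : k \o* f = k *: f) ?rpredZ //; apply/funext => t /=; rewrite mulrC.
rewrite expectationB ?z1 // expectationD ?z1 // !expectationZl //.
rewrite fineB ?fin_numM // fineD ?fin_numM // !fineM //.
by case: a => a b /=; congr (_ +i* _); ring.
Qed.

Lemma Ec0 : Ec P (fun _ => 0) = 0.
Proof.
rewrite /Ec /= (_ : (fun _ : T => (0:R)) = cst 0) // expectation_cst //.
Qed.

Lemma eq_Ec X Y : (forall t, X t = Y t) -> Ec P X = Ec P Y.
Proof. by move/funext => ->. Qed.

Lemma goodc_sum (I : Type) (r : seq I) (F : I -> T -> C) :
  (forall i, goodc (F i)) -> goodc (fun t => \sum_(i <- r) F i t).
Proof.
move=> hg; elim: r => [|y s IHs].
  have -> : (fun t => \sum_(i <- [::]) F i t) = fun _ => 0.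
    by apply/funext => t; rewrite big_nil.
  exact: goodc0.
have -> : (fun t => \sum_(i <- y :: s) F i t) = fun t => F y t + \sum_(i <- s) F i t.
  by apply/funext => t; rewrite big_cons.
exact: goodc_add.
Qed.

Lemma Ec_sum (I : Type) (r : seq I) (F : I -> T -> C) :
  (forall i, goodc (F i)) ->
  Ec P (fun t => \sum_(i <- r) F i t) = \sum_(i <- r) Ec P (F i).
Proof.
move=> hg; elim: r => [|x r IH].
  rewrite big_nil; transitivity (Ec P (fun _ => 0)); last exact: Ec0.
  by apply: eq_Ec => t; rewrite big_nil.
have gs : forall s, goodc (fun t => \sum_(i <- s) F i t).
  elim=> [|y s IHs].
    have -> : (fun t => \sum_(i <- [::]) F i t) = fun _ => 0.
      by apply/funext => t; rewrite big_nil.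
    exact: goodc0.
  have -> : (fun t => \sum_(i <- y :: s) F i t) = fun t => F y t + \sum_(i <- s) F i t.
    by apply/funext => t; rewrite big_cons.
  exact: goodc_add.
rewrite big_cons -IH -Ec_add //.
by apply: eq_Ec => t; rewrite big_cons.
Qed.

Lemma Ecorr_lin (M m n : nat) (A : 'M[C]_(m, M)) (B : 'M[C]_(n, M)) (w : T -> 'cV[C]_M)
  (X : T -> 'cV[C]_m) (Y : T -> 'cV[C]_n) :
  (forall i j, c_integrable P (fun t => w t i 0 * conjc (w t j 0))) ->
  (forall t, X t = A *m w t) -> (forall t, Y t = B *m w t) ->
  Ecorr P X Y = A *m Ecorr P w w *m mxH B.
Proof.
move=> hint hX hY; apply/matrixP => a b; rewrite !mxE.
have e1 : forall t, X t a 0 * conjc (Y t b 0) =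
   \sum_(i < M) \sum_(j < M) (A a i * conjc (B b j)) * (w t i 0 * conjc (w t j 0)).
  move=> t; rewrite hX hY !mxE rmorph_sum /= big_distrl /=; apply: eq_bigr => i _.
  rewrite big_distrr /=; apply: eq_bigr => j _; rewrite rmorphM /=.
  by rewrite mulrACA.
rewrite (eq_Ec e1) Ec_sum; last first.
  move=> i; apply: goodc_sum => j; apply: goodc_scale; exact: goodcE.
rewrite (eq_bigr (fun i => \sum_(j < M) (A a i * conjc (B b j)) * Ecorr P w w i j)); last first.
  move=> i _; rewrite Ec_sum; last by move=> j; apply: goodc_scale; exact: goodcE.
  apply: eq_bigr => j _; rewrite Ec_scale; last exact: goodcE.
  by rewrite mxE.
rewrite exchange_big /=; apply: eq_bigr => j _.
rewrite !mxE big_distrl /=; apply: eq_bigr => i _.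
by rewrite !mxE mulrAC.
Qed.
End Ec.
Section Mx.
Variable R : realType.
Local Notation C := R[i].

Lemma sumsel L (F : 'I_L -> C) (k : nat) (b0 : 'I_L) : (b0 : nat) = k ->
  \sum_(b < L) ((b : nat) == k)%:R * F b = F b0.
Proof.
move=> hb; rewrite (bigD1 b0) //= hb eqxx mul1r big1 ?addr0 // => b hb'.
case: eqP => [hbk|]; last by rewrite mul0r.
by exfalso; move: hb'; rewrite (_ : b = b0) ?eqxx //; apply: val_inj; rewrite /= hbk hb.
Qed.

Definition Vm (M n : nat) (g : 'I_M -> R) : 'M[C]_(n, M) :=
  \matrix_(a < n, i < M) expj (g i) ^+ a.+1.

Lemma sel_first_Vm M N (g : 'I_M -> R) : sel_first R N *m Vm N g = Vm N.-1 g.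
Proof.
apply/matrixP => a i; rewrite !mxE.
have ha : (a < N)%N by apply: leq_trans (ltn_ord a) (leq_pred N).
rewrite (eq_bigr (fun b : 'I_N => ((b : nat) == a)%:R * Vm N g b i)); last by move=> b _; rewrite mxE.
by rewrite (sumsel _ (b0 := Ordinal ha)) // mxE.
Qed.

Lemma sel_last_Vm M N (g : 'I_M -> R) : sel_last R N *m Vm N g = Vm N.-1 g *m diag_mx (\row_i expj (g i)).
Proof.
apply/matrixP => a i; rewrite mul_mx_diag !mxE.
have ha : (a.+1 < N)%N by case: N a => [|N] [a ha] //.
rewrite (eq_bigr (fun b : 'I_N => ((b : nat) == a.+1)%:R * Vm N g b i)); last by move=> b _; rewrite mxE.
by rewrite (sumsel _ (b0 := Ordinal ha)) // !mxE exprSr.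
Qed.

Definition Selm (M n : nat) : 'M[C]_(M, n) := \matrix_(k < M, a < n) ((a : nat) == k)%:R.

Lemma Selm_Vm M n (g : 'I_M -> R) : (M <= n)%N -> Selm M n *m Vm n g = Vm M g.
Proof.
move=> hM; apply/matrixP => a i; rewrite !mxE.
have ha : (a < n)%N by apply: leq_trans (ltn_ord a) hM.
rewrite (eq_bigr (fun b : 'I_n => ((b : nat) == a)%:R * Vm n g b i)); last by move=> b _; rewrite mxE.
by rewrite (sumsel _ (b0 := Ordinal ha)) // !mxE.
Qed.

Lemma Vm_unit M (g : 'I_M -> R) : (forall i j, i != j -> expj (g i) != expj (g j) :> C) ->
  Vm M g \in unitmx.
Proof.
move=> hd.
have -> : Vm M g = Vandermonde M (\row_i expj (g i) : 'rV[C]_M) *m diag_mx (\row_i expj (g i)).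
  by apply/matrixP => a i; rewrite mul_mx_diag !mxE exprSr.
rewrite unitmx_mul; apply/andP; split; rewrite unitmxE unitfE.
- rewrite det_Vandermonde; apply/prodf_neq0 => i _; apply/prodf_neq0 => j hij; rewrite !mxE subr_eq0.
  by apply: hd; rewrite neq_ltn hij orbT.
- by rewrite det_diag; apply/prodf_neq0 => i _; rewrite mxE expj_neq0.
Qed.
End Mx.
Section Svd.
Variable R : realType.
Local Notation C := R[i].

Lemma mxH_mul m n p (A : 'M[C]_(m, n)) (B : 'M[C]_(n, p)) : mxH (A *m B) = mxH B *m mxH A.
Proof. by rewrite /mxH map_mxM trmx_mul. Qed.

Lemma mxH_diag n (r : 'rV[C]_n) : mxH (diag_mx r) = diag_mx (map_mx conjc r).
Proof. by rewrite /mxH map_diag_mx tr_diag_mx. Qed.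

Lemma svd_part (K n M : nat) (Rm : 'M[C]_(K, n)) (G : 'M[C]_(K, M)) (W : 'M[C]_(M, n))
  (U1 : 'M[C]_(K, M)) :
  Rm = G *m W -> (M <= \rank Rm)%N -> (M <= K)%N -> (M <= n)%N ->
  top_left_sing_vecs Rm U1 -> exists T, T \in unitmx /\ U1 = G *m T.
Proof.
move=> hRm hrk hK hn [U [S [V [[hU hV [hS1 hS2 hS3] hA] ->]]]].
have hnz : forall (a : 'I_K) (j : 'I_n), (a : nat) = j -> (a < M)%N -> S a j != 0.
  move=> a j haj haM; apply/negP => /eqP hz.
  have hzero : forall (a' : 'I_K) (j' : 'I_n), (a' : nat) = j' -> (a <= a')%N -> S a' j' = 0.
    move=> a' j' h1 h2; have [hi hr] := hS2 a' j' h1.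
    have := hS3 a a' j j' haj h1 h2; rewrite hz /= => hle.
    have hre : complex.Re (S a' j') = 0 by apply/eqP; rewrite eq_le hle hr.
    by move: hi hre; case: (S a' j') => x y /= -> ->.
  have hSp : S = S *m pid_mx a.
    apply/matrixP => i0 j0; rewrite !mxE (bigD1 j0) //= !mxE eqxx /=.
    rewrite big1 ?addr0; last first.
      move=> k hk; rewrite mxE; case: eqP => [/val_inj e|_]; last by rewrite mulr0.
      by rewrite e eqxx in hk.
    case: (ltnP j0 a) => hja; first by rewrite mulr1.
    rewrite mulr0; have [hij|hij] := eqVneq (i0 : nat) j0.
      by apply: hzero => //; rewrite hij.
    by apply: hS1; apply/eqP.
  have : (\rank Rm <= a)%N.
    rewrite hA; apply: leq_trans (mxrankM_maxl _ _) _.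
    apply: leq_trans (mxrankM_maxr _ _) _.
    rewrite hSp; apply: leq_trans (mxrankM_maxr _ _) _.
    by rewrite rank_pid_mx // haj ltnW.
  move=> h; have := leq_trans hrk h; by rewrite leqNgt haM.
pose wK (k : 'I_M) : 'I_K := widen_ord hK k.
pose wn (k : 'I_M) : 'I_n := widen_ord hn k.
pose D : 'M[C]_(n, M) := \matrix_(j < n, k < M) (((j : nat) == k)%:R * (S (wK k) j)^-1).
have hSD : S *m D = first_cols R K M.
  apply/matrixP => a k; rewrite !mxE.
  rewrite (eq_bigr (fun j : 'I_n => ((j : nat) == k)%:R * (S a j * (S (wK k) j)^-1))); last first.
    by move=> j _; rewrite mxE mulrCA.
  rewrite (sumsel _ (b0 := wn k)) //.
  case: eqP => [e|ne].
    have -> : a = wK k by apply: val_inj.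
    by rewrite mulfV //; apply: hnz => //=.
  by rewrite hS1 ?mul0r.
have hUS : U *m S = Rm *m V by rewrite hA -!mulmxA hV mulmx1.
exists (W *m V *m D); split; last by rewrite -hSD mulmxA hUS hRm !mulmxA.
have hfc : mxH (first_cols R K M) *m first_cols R K M = 1%:M.
  apply/matrixP => i j; rewrite !mxE.
  rewrite (eq_bigr (fun a : 'I_K => ((a : nat) == i)%:R * ((a : nat) == j)%:R)); last first.
    by move=> a _; rewrite !mxE conjc_nat.
  by rewrite (sumsel _ (b0 := wK i)) //.
have hU1 : mxH (U *m first_cols R K M) *m (U *m first_cols R K M) = 1%:M.
  by rewrite mxH_mul mulmxA -(mulmxA _ (mxH U)) hU mulmx1 hfc.
rewrite -row_free_unit /row_free eqn_leq rank_leq_row /=.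
rewrite -{1}(mxrank1 C M) -hU1.
apply: leq_trans (mxrankM_maxr _ _) _.
rewrite -hSD mulmxA hUS hRm -!mulmxA.
exact: mxrankM_maxr.
Qed.
End Svd.
Section Aux.
Variable R : realType.
Local Notation C := R[i].

Lemma diag_comm M (Rw : 'M[C]_M) (r : 'rV[C]_M) :
  (forall i j : 'I_M, i != j -> Rw i j = 0) -> Rw *m diag_mx r = diag_mx r *m Rw.
Proof.
move=> h; apply/matrixP => i j; rewrite mul_mx_diag mul_diag_mx !mxE.
have [->|ne] := eqVneq i j; first by rewrite mulrC.
by rewrite h // mul0r mulr0.
Qed.

Lemma Rw_unit M (Rw : 'M[C]_M) :
  (forall i j : 'I_M, i != j -> Rw i j = 0) -> (forall i, Rw i i != 0) -> Rw \in unitmx.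
Proof.
move=> h1 h2; have -> : Rw = diag_mx (\row_i Rw i i).
  apply/matrixP => i j; rewrite !mxE; have [->|ne] := eqVneq i j; first by rewrite mulr1n.
  by rewrite h1 // mulr0n.
by rewrite unitmxE det_diag unitfE; apply/prodf_neq0 => i _; rewrite mxE.
Qed.

Lemma mxH_unit n (A : 'M[C]_n) : A \in unitmx -> mxH A \in unitmx.
Proof. by rewrite /mxH unitmx_tr map_unitmx. Qed.

Lemma small_diff (k F p u v : R) : 0 < p -> 0 < k -> k * F <= 1 ->
  `|u| < F / 2 -> `|v| < F / 2 -> `|2 * p * k * (u - v)| < p *+ 2.
Proof.
move=> hp hk hkF; rewrite !ltr_norml => /andP[u1 u2] /andP[v1 v2].
have h1 : k * (u - v) < 1 by nra.
have h2 : - 1 < k * (u - v) by nra.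
rewrite -mulr_natr; apply/andP; split; nra.
Qed.
End Aux.

Theorem lemma2 (R : realType) (M N : nat)
  (fNyq B c dsp : R) (f th : 'I_M -> R)
  (d : measure_display) (T : measurableType d) (P : probability T R)
  (w : T -> 'cV[R[i]]_M) :
  (* class M_2 *)
  0 < fNyq -> 0 < B -> 0 < c -> 0 < dsp ->
  (forall i, - (fNyq / 2) <= f i - B / 2 /\ f i + B / 2 <= fNyq / 2) ->
  (forall i j, i != j -> B < `|f i - f j|) ->
  (forall i, `|th i| < pi / 2) ->
  (forall i j, i != j -> f i * cos (th i) != f j * cos (th j)) ->
  (forall i j, i != j -> f i * sin (th i) != f j * sin (th j)) ->
  (* R_w = E[w w^H] exists, is diagonal with nonzero diagonal entries *)
  (forall i j, c_integrable P (fun t => w t i 0 * conjc (w t j 0))) ->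
  (forall i j : 'I_M, i != j -> Ecorr P w w i j = 0) ->
  (forall i : 'I_M, Ecorr P w w i i != 0) ->
  let x := fun t => Ax N dsp c f th *m w t in
  let z := fun t => Az N dsp c f th *m w t in
  let x1 := fun t => sel_first R N *m x t in
  let x2 := fun t => sel_last R N *m x t in
  let z1 := fun t => sel_first R N *m z t in
  let z2 := fun t => sel_last R N *m z t in
  let R1 := Ecorr P x1 z1 in
  let R2 := Ecorr P x2 z1 in
  let R3 := Ecorr P x1 z2 in
  let Rm := col_mx (col_mx R1 R2) R3 in
  let Ax1 := sel_first R N *m Ax N dsp c f th in
  forall U1 : 'M[R[i]]_(N.-1 + N.-1 + N.-1, M),
  top_left_sing_vecs Rm U1 ->
  dsp <= c / fNyq ->
  (M < N)%N ->
  exists Tm : 'M[R[i]]_M, Tm \in unitmx /\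
    U1 = col_mx (col_mx Ax1 (Ax1 *m Phi dsp c f th)) (Ax1 *m mxH (Psi dsp c f th)) *m Tm.
Proof.
move=> hF hB hc hd hf _ _ hcos hsin hint hoff hdiag x z x1 x2 z1 z2 R1 R2 R3 Rm Ax1 U1 hU1 hdsp hMN.
pose gx (i : 'I_M) := 2 * pi * f i * taux dsp c 1 (th i).
pose gz (i : 'I_M) := 2 * pi * f i * tauz dsp c 1 (th i).
have hAx : Ax N dsp c f th = Vm N gx.
  apply/matrixP => a i; rewrite !mxE expjX; congr expj; rewrite /gx /taux; ring.
have hAz : Az N dsp c f th = Vm N gz.
  apply/matrixP => a i; rewrite !mxE expjX; congr expj; rewrite /gz /tauz; ring.
have hPhi : Phi dsp c f th = diag_mx (\row_i expj (gx i)) by [].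
have hPsi : Psi dsp c f th = diag_mx (\row_i expj (gz i)) by [].
pose Rw := Ecorr P w w.
have eAx1 : Ax1 = Vm N.-1 gx by rewrite /Ax1 hAx sel_first_Vm.
have eR1 : R1 = Vm N.-1 gx *m Rw *m mxH (Vm N.-1 gz).
  apply: Ecorr_lin => // t.
    by rewrite /x1 /x mulmxA hAx sel_first_Vm.
  by rewrite /z1 /z mulmxA hAz sel_first_Vm.
have eR2 : R2 = (Vm N.-1 gx *m Phi dsp c f th) *m Rw *m mxH (Vm N.-1 gz).
  apply: Ecorr_lin => // t.
    by rewrite /x2 /x mulmxA hAx sel_last_Vm hPhi.
  by rewrite /z1 /z mulmxA hAz sel_first_Vm.
have eR3 : R3 = Vm N.-1 gx *m Rw *m mxH (Vm N.-1 gz *m Psi dsp c f th).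
  apply: Ecorr_lin => // t.
    by rewrite /x1 /x mulmxA hAx sel_first_Vm.
  by rewrite /z2 /z mulmxA hAz sel_last_Vm hPsi.
have hMn : (M <= N.-1)%N by rewrite -ltnS (leq_trans hMN) // leqSpred.
have hKM : (M <= N.-1 + N.-1 + N.-1)%N by apply: leq_trans hMn _; rewrite -addnA leq_addr.
have hRmG : Rm = col_mx (col_mx Ax1 (Ax1 *m Phi dsp c f th)) (Ax1 *m mxH (Psi dsp c f th))
                 *m (Rw *m mxH (Vm N.-1 gz)).
  rewrite /Rm !mul_col_mx eR1 eR2 eR3 eAx1 -!mulmxA; congr (col_mx (col_mx _ _) _).
  rewrite mxH_mul !mulmxA; congr (_ *m _); rewrite -!mulmxA; congr (_ *m _).
  by rewrite hPsi mxH_diag diag_comm.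
have hk : 0 < dsp / c by rewrite divr_gt0.
have hkF : dsp / c * fNyq <= 1.
  by rewrite mulrAC ler_pdivrMr // mul1r -ler_pdivlMr.
have hfb : forall i, `|f i| < fNyq / 2.
  move=> i; have [h1 h2] := hf i; rewrite ltr_norml; apply/andP; split; lra.
have hdist : forall (tr : R -> R) (g : 'I_M -> R),
   (forall y, `|tr y| <= 1) ->
   (forall i, g i = 2 * pi * (dsp / c) * (f i * tr (th i))) ->
   (forall i j, i != j -> f i * tr (th i) != f j * tr (th j)) ->
   forall i j, i != j -> expj (g i) != expj (g j) :> R[i].
  move=> tr g htr hg hne i j hij; apply/negP => /eqP /expj_inj.
  have hb : forall l, `|f l * tr (th l)| < fNyq / 2.
    move=> l; rewrite normrM; apply: le_lt_trans (hfb l).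
    by rewrite -[leRHS]mulr1 ler_wpM2l.
  rewrite !hg -mulrBr => /(_ (small_diff (pi_gt0 R) hk hkF (hb i) (hb j))) /eqP.
  rewrite -subr_eq0 -mulrBr mulf_eq0 subr_eq0 (negbTE (hne i j hij)) orbF.
  by rewrite !mulf_eq0 invr_eq0 (gt_eqF hd) (gt_eqF hc) (gt_eqF (pi_gt0 R)) pnatr_eq0.
have ux : Vm M gx \in unitmx.
  apply: Vm_unit; apply: (hdist cos) => //.
    by move=> y; rewrite ler_norml cos_le1 cos_geN1.
  by move=> i; rewrite /gx /taux; ring.
have uz : Vm M gz \in unitmx.
  apply: Vm_unit; apply: (hdist sin) => //.
    by move=> y; rewrite ler_norml sin_le1 sin_geN1.
  by move=> i; rewrite /gz /tauz; ring.
refine (svd_part hRmG _ hKM hMn hU1).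
pose E : 'M[R[i]]_(M, N.-1 + N.-1 + N.-1) := row_mx (row_mx (Selm R M N.-1) 0) 0.
have hE : E *m Rm *m mxH (Selm R M N.-1) = Vm M gx *m Rw *m mxH (Vm M gz).
  rewrite /E /Rm !mul_row_col !mul0mx !addr0 eR1 -!mulmxA -mxH_mul !mulmxA.
  by rewrite !(Selm_Vm _ hMn).
have hu : E *m Rm *m mxH (Selm R M N.-1) \in unitmx.
  rewrite hE !unitmx_mul ux mxH_unit // andbT.
  exact: Rw_unit.
rewrite -(mxrank_unit hu).
apply: leq_trans (mxrankM_maxl _ _) _.
exact: mxrankM_maxr.
Qed.
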